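(* Under Assumption A(b),(c) in setting (E), let $\mathbf p\in(0,1]$, $b\ge1$, set $\widetilde S^{-1}:=Gx^0$ and for $k\ge0$ $$\widetilde S^k:=\begin{cases}\widetilde S^{k-1}+2G_{\mathcal B_k}x^k-3G_{\mathcal B_k}x^{k-1}+G_{\mathcal B_k}x^{k-2}&\text{with probability }1-\mathbf p,\\ \overline S^k&\text{with probability }\mathbf p,\end{cases}$$ where $\mathcal B_k$ is a fresh i.i.d. mini-batch of size $b$, and $\overline S^k$ satisfies $\mathbb E_k[\overline S^k]=S^k$ and $\mathbb E_k\|\overline S^k-S^k\|^2\le\sigma_k^2$ (e.g. $\overline S^k=S^k$ with $\sigma_k=0$, or a mega-batch average of $2\mathbf G(x^k,\zeta)-\mathbf G(x^{k-1},\zeta)$ of size $n_k$). Then $\widetilde S^k$ belongs to class (B) with $\Delta_k:=\|\widetilde S^k-S^k\|^2$, $\tau=\mathbf p$, $\kappa=\mathbf p$, $\Theta=\frac{8(1-\mathbf p)L^2}{b}$, $\hat\Theta=\frac{2(1-\mathbf p)L^2}{b}$, $\delta_k=\mathbf p\sigma_k^2$.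
   Context: Setting: $G:\mathbb{R}^p\to\mathbb{R}^p$, $T:\mathbb{R}^p\rightrightarrows\mathbb{R}^p$, $\Phi:=G+T$, $\mathrm{zer}\,\Phi:=\{x:0\in Gx+Tx\}$, $J_{\eta T}:=(\mathbb{I}+\eta T)^{-1}$. (E): $Gx=\mathbb{E}_{\zeta\sim\mathbb P}[\mathbf G(x,\zeta)]$; (F) $Gx=\frac1n\sum_iG_ix$ is the special case with $\zeta$ uniform on $\{1,\dots,n\}$. $G_{\mathcal B}x:=\frac1{|\mathcal B|}\sum_{\zeta\in\mathcal B}\mathbf G(x,\zeta)$; an i.i.d. mini-batch of size $b$ is $b$ samples drawn i.i.d. from $\mathbb P$ independently of the past. Assumption A: (b) $\mathbb{E}_\zeta\|\mathbf G(x,\zeta)-Gx\|^2\le\sigma^2$ for all $x$; (c) $\mathbb{E}_\zeta\|\mathbf G(x,\zeta)-\mathbf G(y,\zeta)\|^2\le L^2\|x-y\|^2$ for all $x,y$. Scheme (VrFRBS): stepsize $\eta>0$, $x^0$, $x^{-2}=x^{-1}=x^0$, $\xi^0\in Tx^0$; for $k\ge0$: $S^k:=2Gx^k-Gx^{k-1}$, estimator $\widetilde S^k$, $x^{k+1}\in J_{\eta T}(x^k-\eta\widetilde S^k)$, $\xi^{k+1}:=\eta^{-1}(x^k-\eta\widetilde S^k-x^{k+1})\in Tx^{k+1}$; $e^k:=\widetilde S^k-S^k$ (so $e^{-1}=0$ with $S^{-1}:=Gx^0$). $\mathcal F_k$: $\sigma$-algebra of all randomness up to iteration $k$; $\mathbb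 E_k[\cdot]:=\mathbb E[\cdot\mid\mathcal F_k]$. Class (B) (biased variance-reduced): there exist nonnegative random variables $\Delta_k$ ($\Delta_{-1}:=0$), constants $\tau,\kappa\in(0,1]$, $\Theta,\hat\Theta\ge0$, nonnegative $\{\delta_k\}$, such that with $e^{-1}:=0$, a.s. for all $k\ge0$: $\mathbb E_k[e^k]=(1-\tau)e^{k-1}$; $\mathbb E_k\|e^k\|^2\le\mathbb E_k[\Delta_k]$; $\mathbb E_k[\Delta_k]\le(1-\kappa)\Delta_{k-1}+\Theta\|x^k-x^{k-1}\|^2+\hat\Theta\|x^{k-1}-x^{k-2}\|^2+\delta_k$. *)

(* Defs.v *)
From HB Require Import structures.
From mathcomp Require Import all_boot all_order all_algebra.
From mathcomp Require Import all_classical all_reals all_analysis.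

Set Implicit Arguments.
Unset Strict Implicit.
Unset Printing Implicit Defensive.

Import Order.TTheory GRing.Theory Num.Theory.
Local Open Scope classical_set_scope.
Local Open Scope ring_scope.

Definition sqnorm (R : realType) (p : nat) (v : 'rV[R]_p) : R :=
  \sum_(j < p) (v ord0 j) ^+ 2.

Definition batch_avg (R : realType) (p : nat) (Z : Type) (b : nat)
  (Gs : 'rV[R]_p -> Z -> 'rV[R]_p) (B : 'I_b -> Z) (x : 'rV[R]_p) : 'rV[R]_p :=
  (b%:R)^-1 *: \sum_(i < b) Gs x (B i).

(* The estimator at step k, as a function of the fresh randomness w:
   coin w = true  <-> the "probability p" branch (Stilde^k = Sbar^k);
   coin w = false <-> the recursive branch. *)
Definition vr_estimator (R : realType) (p : nat) (T Z : Type) (b : nat)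
  (Gs : 'rV[R]_p -> Z -> 'rV[R]_p)
  (coin : T -> bool) (batch : 'I_b -> T -> Z) (Sbar : T -> 'rV[R]_p)
  (Sprev xk xk1 xk2 : 'rV[R]_p) (w : T) : 'rV[R]_p :=
  if coin w then Sbar w
  else Sprev + 2%:R *: batch_avg Gs (fun i => batch i w) xk
             - 3%:R *: batch_avg Gs (fun i => batch i w) xk1
             + batch_avg Gs (fun i => batch i w) xk2.

Definition indep_coin_batch d dZ (T : measurableType d) (Z : measurableType dZ)
  (R : realType) (P : probability T R) (b : nat)
  (coin : T -> bool) (batch : 'I_b -> T -> Z) : Prop :=
  forall (B : set bool) (A : 'I_b -> set Z), (forall i, measurable (A i)) ->
    P (coin @^-1` B `&` \bigcap_i (batch i @^-1` A i))
    = (P (coin @^-1` B) * \prod_(i < b) P (batch i @^-1` A i))%E.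

(* Independence of the coin and the random vector Sbar (product rule on the
   pi-system of measurable rectangles generating the sigma-algebra of Sbar). *)
Definition indep_coin_vec d (T : measurableType d) (R : realType)
  (P : probability T R) (p : nat) (coin : T -> bool) (V : T -> 'rV[R]_p) : Prop :=
  forall (B : set bool) (A : 'I_p -> set R), (forall j, measurable (A j)) ->
    P (coin @^-1` B `&` \bigcap_j ((fun w => V w ord0 j) @^-1` A j))
    = (P (coin @^-1` B) * P (\bigcap_j ((fun w => V w ord0 j) @^-1` A j)))%E.

(* One step (index k) of the class (B) conditions, with the conditional
   expectation E_k realised as the expectation over the fresh randomness of
   iteration k, all F_k-measurable quantities (x^k, x^{k-1}, x^{k-2},
   e^{k-1}, Delta_{k-1}) being frozen. *)
Local Open Scope ereal_scope.
Definition classB_step d (T : measurableType d) (R : realType)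
  (P : probability T R) (p : nat)
  (e : T -> 'rV[R]_p) (Delta : T -> R) (eprev : 'rV[R]_p) (Dprev : R)
  (xk xk1 xk2 : 'rV[R]_p) (tau kappa Theta Thetahat delta : R) : Prop :=
  [/\ (0 < tau <= 1)%R, (0 < kappa <= 1)%R, (0 <= Theta)%R, (0 <= Thetahat)%R & (0 <= delta)%R] /\
  [/\ (forall w, 0 <= Delta w)%R /\ (0 <= Dprev)%R,
      (forall j, 'E_P[fun w => e w ord0 j] = ((1 - tau) * eprev ord0 j)%R%:E),
      ('E_P[fun w => sqnorm (e w)] <= 'E_P[Delta])%E &
      ('E_P[Delta] <= ((1 - kappa) * Dprev + Theta * sqnorm (xk - xk1)
                      + Thetahat * sqnorm (xk1 - xk2) + delta)%R%:E)%E].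

(* Main.v *)
Require Import Defs.
From HB Require Import structures.
From mathcomp Require Import all_boot all_order all_algebra.
From mathcomp Require Import all_classical all_reals all_analysis.
From mathcomp Require Import measurable_realfun ring lra.
Import Order.TTheory GRing.Theory Num.Theory.
Set Implicit Arguments.
Unset Strict Implicit.
Unset Printing Implicit Defensive.
Local Open Scope classical_set_scope.
Local Open Scope ring_scope.
Local Open Scope ereal_scope.

Section tools.
Context {R : realType} d (T : measurableType d) (P : probability T R).

Lemma restr_int (D : set T) (mD : measurable D) (F : T -> \bar R) :
  measurable_fun setT F ->
  \int[P]_(w in D) F w = \int[mrestr P mD]_w F w.
Proof.
move=> mF.
have -> : [set: T] = D `|` ~` D by rewrite setUv.
rewrite integral_setU //; last 3 first.
- exact: measurableC.
- by rewrite setUv.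
- by rewrite disj_set2E setICr.
rewrite (@null_set_integral _ _ _ (mrestr P mD) (~` D)) //; last 3 first.
- exact: measurableC.
- exact: measurable_funS mF.
- by change (P (~` D `&` D) = 0); rewrite setICl measure0.
rewrite adde0; apply: eq_measure_integral => A mA AD.
by change (P A = P (A `&` D)); rewrite setIidl.
Qed.

Lemma K1 d' (Y : measurableType d') (X : T -> Y) (mX : measurable_fun setT X)
  (m : {measure set Y -> \bar R}) (D : set T) (mD : measurable D) (c : R)
  (c0 : (0 <= c)%R)
  (hyp : forall A, measurable A -> P (D `&` X @^-1` A) = c%:E * m A)
  (f : Y -> \bar R) (mf : measurable_fun setT f) (f0 : forall y, 0 <= f y) :
  \int[P]_(w in D) f (X w) = c%:E * \int[m]_y f y.
Proof.
rewrite restr_int //; last exact: measurableT_comp.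
have := @ge0_integral_pushforward _ _ T Y R X mX (mrestr P mD) setT f measurableT mf (fun y _ => f0 y).
rewrite preimage_setT => <-.
transitivity (\int[mscale (NngNum c0) m]_y f y); last by rewrite ge0_integral_mscale.
apply: eq_measure_integral => A mA _.
change (P (X @^-1` A `&` D) = c%:E * m A); by rewrite setIC hyp.
Qed.


Lemma K2 d' (Y : measurableType d') (X : T -> Y) (mX : measurable_fun setT X)
  (m : {measure set Y -> \bar R}) (D : set T) (mD : measurable D) (c : R)
  (c0 : (0 <= c)%R)
  (hyp : forall A, measurable A -> P (D `&` X @^-1` A) = c%:E * m A)
  (f : Y -> R) (fi : m.-integrable setT (EFin \o f)) :
  P.-integrable D (fun w => (f (X w))%:E) /\
  \int[P]_(w in D) (f (X w))%:E = c%:E * \int[m]_y (f y)%:E.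
Proof.
have mf : measurable_fun setT (EFin \o f) by case/integrableP: fi.
have mfX : measurable_fun setT (fun w => (f (X w))%:E).
  exact: (measurableT_comp mf mX).
split.
  apply/integrableP; split; first exact: measurable_funS mfX.
  rewrite (K1 mX mD c0 hyp (f := fun y => `|(f y)%:E|)) //.
  - by apply: lte_mul_pinfty => //; case/integrableP: fi.
  - exact: measurableT_comp.
rewrite [LHS]integralE [in RHS]integralE.
have -> : \int[P]_(w in D) (fun w => (f (X w))%:E)^\+ w
   = \int[P]_(w in D) (EFin \o f)^\+ (X w).
  by have -> : (fun w => (f (X w))%:E) = (EFin \o f) \o X by []; rewrite funepos_comp.
have -> : \int[P]_(w in D) (fun w => (f (X w))%:E)^\- w
   = \int[P]_(w in D) (EFin \o f)^\- (X w).
  by have -> : (fun w => (f (X w))%:E) = (EFin \o f) \o X by []; rewrite funeneg_comp.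
rewrite (K1 mX mD c0 hyp (f := (EFin \o f)^\+)) //; last first.
  exact: measurable_funepos.
rewrite (K1 mX mD c0 hyp (f := (EFin \o f)^\-)) //; last first.
  exact: measurable_funeneg.
by rewrite [RHS]muleBr //; exact: (integrable_add_def measurableT fi).
Qed.


Lemma K3 dZ (Z : measurableType dZ) (mu : probability Z R) (X Y : T -> Z)
  (mX : measurable_fun setT X) (mY : measurable_fun setT Y)
  (D : set T) (mD : measurable D) (c : R) (c0 : (0 <= c)%R)
  (hyp : forall A B, measurable A -> measurable B ->
     P (D `&` X @^-1` A `&` Y @^-1` B) = c%:E * (mu A * mu B))
  (f g : Z -> R) (mf : measurable_fun setT f) (mg : measurable_fun setT g)
  (f0 : forall z, (0 <= f z)%R) (g0 : forall z, (0 <= g z)%R) :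
  \int[P]_(w in D) (f (X w) * g (Y w))%:E
   = c%:E * (\int[mu]_z (f z)%:E * \int[mu]_z (g z)%:E).
Proof.
pose XY := fun w => (X w, Y w).
have mXY : measurable_fun setT XY by exact: measurable_fun_pair.
have hypXY : forall A, measurable A ->
    P (D `&` XY @^-1` A) = c%:E * (mu \x mu) A.
  move=> A mA.
  rewrite setIC.
  change (pushforward (mrestr P mD) XY A = mscale (NngNum c0) (mu \x mu) A).
  apply: (@measure_unique _ R _ [set A `*` B | A in measurable & B in measurable]
    (fun _ => setT) (measurable_prod_measurableType Z Z)) => //.
  - move=> _ _ [A1 mA1 [B1 mB1 <-]] [A2 mA2 [B2 mB2 <-]].
    rewrite -setXI; exists (A1 `&` A2); first exact: measurableI.
    by exists (B1 `&` B2) => //; exact: measurableI.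
  - move=> _; exists setT => //; exists setT => //; exact: setXTT.
  - by rewrite bigcup_const.
  - move=> _ [A1 mA1 [B1 mB1 <-]].
    change (P (XY @^-1` (A1 `*` B1) `&` D) = c%:E * (mu \x mu) (A1 `*` B1)).
    rewrite product_measure1E // -hyp // setIC setIA.
    by congr (P _); apply/seteqP; split => w /=; case.
  - move=> _; change (P (XY @^-1` setT `&` D) < +oo).
    by rewrite (le_lt_trans (probability_le1 _ _)) ?ltry //;
      apply: measurableI => //; rewrite preimage_setT.
have mF : measurable_fun setT (fun z : Z * Z => (f z.1 * g z.2)%:E).
  apply/measurable_EFinP; apply: measurable_funM.
  - exact: (measurableT_comp mf measurable_fst).
  - exact: (measurableT_comp mg measurable_snd).
have F0 : forall z : Z * Z, 0 <= (f z.1 * g z.2)%:E.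
  by move=> z; rewrite lee_fin mulr_ge0.
rewrite (K1 mXY mD c0 hypXY mF F0).
rewrite (fubini_tonelli1 _ mF F0) /fubini_F /=.
congr (_ * _).
under eq_integral => x _.
  under eq_integral do rewrite EFinM.
  rewrite ge0_integralZl_EFin //; last first.
  - exact/measurable_EFinP.
  - by move=> y _; rewrite lee_fin.
  rewrite muleC.
  over.
rewrite /= ge0_integralZl //.
- by rewrite muleC.
- exact/measurable_EFinP.
- by move=> y _; rewrite lee_fin.
- by apply: integral_ge0 => y _; rewrite lee_fin.
Qed.


Lemma fin_int dZ (Z : measurableType dZ) (m : {measure set Z -> \bar R})
  (D : set Z) (mD : measurable D) (h : Z -> R) : m.-integrable D (EFin \o h) ->
  \int[m]_(z in D) (h z)%:E = (fine (\int[m]_(z in D) (h z)%:E))%:E.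
Proof. by move=> hi; rewrite fineK // (integrable_fin_num mD hi). Qed.

Lemma K3r dZ (Z : measurableType dZ) (mu : probability Z R) (X Y : T -> Z)
  (mX : measurable_fun setT X) (mY : measurable_fun setT Y)
  (D : set T) (mD : measurable D) (c : R) (c0 : (0 <= c)%R)
  (hyp : forall A B, measurable A -> measurable B ->
     P (D `&` X @^-1` A `&` Y @^-1` B) = c%:E * (mu A * mu B))
  (f g : Z -> R) (fi : mu.-integrable setT (EFin \o f))
  (gi : mu.-integrable setT (EFin \o g))
  (f0 : forall z, (0 <= f z)%R) (g0 : forall z, (0 <= g z)%R) :
  P.-integrable D (fun w => (f (X w) * g (Y w))%:E) /\
  \int[P]_(w in D) (f (X w) * g (Y w))%:E
   = (c * (fine (\int[mu]_z (f z)%:E) * fine (\int[mu]_z (g z)%:E)))%:E.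
Proof.
have mf : measurable_fun setT f by apply/measurable_EFinP; case/integrableP: fi.
have mg : measurable_fun setT g by apply/measurable_EFinP; case/integrableP: gi.
have E := K3 mX mY mD c0 hyp mf mg f0 g0.
rewrite (fin_int measurableT fi) (fin_int measurableT gi) in E.
split; last by rewrite E.
apply/integrableP; split.
  apply/measurable_EFinP; apply: (measurable_funS measurableT (@subsetT _ D)).
  apply: measurable_funM.
  - exact: (measurableT_comp mf mX).
  - exact: (measurableT_comp mg mY).
under eq_integral do rewrite gee0_abs ?lee_fin ?mulr_ge0 //.
by rewrite E ltry.
Qed.

Lemma K4 dZ (Z : measurableType dZ) (mu : probability Z R) (X Y : T -> Z)
  (mX : measurable_fun setT X) (mY : measurable_fun setT Y)
  (D : set T) (mD : measurable D) (c : R) (c0 : (0 <= c)%R)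
  (hyp : forall A B, measurable A -> measurable B ->
     P (D `&` X @^-1` A `&` Y @^-1` B) = c%:E * (mu A * mu B))
  (f g : Z -> R) (fi : mu.-integrable setT (EFin \o f))
  (gi : mu.-integrable setT (EFin \o g)) :
  P.-integrable D (fun w => (f (X w) * g (Y w))%:E) /\
  \int[P]_(w in D) (f (X w) * g (Y w))%:E
   = (c * (fine (\int[mu]_z (f z)%:E) * fine (\int[mu]_z (g z)%:E)))%:E.
Proof.
have mf : measurable_fun setT f by apply/measurable_EFinP; case/integrableP: fi.
have mg : measurable_fun setT g by apply/measurable_EFinP; case/integrableP: gi.
have posi : forall h : Z -> R, mu.-integrable setT (EFin \o h) ->
    mu.-integrable setT (EFin \o h^\+)%R /\ mu.-integrable setT (EFin \o h^\-)%R.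
  move=> h hi; have mh : measurable_fun setT h.
    by apply/measurable_EFinP; case/integrableP: hi.
  split; apply: (le_integrable measurableT _ _ hi).
  - by apply/measurable_EFinP; exact: measurable_funrpos.
  - move=> z _ /=; rewrite !lee_fin ger0_norm ?funrpos_ge0 //.
    by rewrite /funrpos ge_max normr_ge0 ler_norm.
  - by apply/measurable_EFinP; exact: measurable_funrneg.
  - move=> z _ /=; rewrite !lee_fin ger0_norm ?funrneg_ge0 //.
    by rewrite /funrneg ge_max normr_ge0 -normrN ler_norm.
have [fpi fni] := posi f fi.
have [gpi gni] := posi g gi.
have intB : forall h : Z -> R, mu.-integrable setT (EFin \o h) ->
    fine (\int[mu]_z (h z)%:E) =
    (fine (\int[mu]_z (h^\+ z)%:E) - fine (\int[mu]_z (h^\- z)%:E))%R.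
  move=> h hi; have [hpi hni] := posi h hi.
  rewrite -[in LHS](funrposBneg h) /=.
  have -> : \int[mu]_z (((h^\+)%R - (h^\-)%R)%R z)%:E =
      \int[mu]_z ((h^\+ z)%:E - (h^\- z)%:E) by [].
  rewrite integralB_EFin // (fin_int measurableT hpi) (fin_int measurableT hni) //.
have [ipp Epp] := K3r mX mY mD c0 hyp fpi gpi (@funrpos_ge0 _ _ _) (@funrpos_ge0 _ _ _).
have [inn Enn] := K3r mX mY mD c0 hyp fni gni (@funrneg_ge0 _ _ _) (@funrneg_ge0 _ _ _).
have [ipn Epn] := K3r mX mY mD c0 hyp fpi gni (@funrpos_ge0 _ _ _) (@funrneg_ge0 _ _ _).
have [inp Enp] := K3r mX mY mD c0 hyp fni gpi (@funrneg_ge0 _ _ _) (@funrpos_ge0 _ _ _).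
have eqf : forall w, (f (X w) * g (Y w))%R =
   ((f^\+ (X w) * g^\+ (Y w) + f^\- (X w) * g^\- (Y w))
   - (f^\+ (X w) * g^\- (Y w) + f^\- (X w) * g^\+ (Y w)))%R.
  move=> w; rewrite -{1}(funrposBneg f) -{1}(funrposBneg g) /=.
  rewrite !fctE; ring.
pose A := fun w => (f^\+ (X w) * g^\+ (Y w) + f^\- (X w) * g^\- (Y w))%R.
pose B := fun w => (f^\+ (X w) * g^\- (Y w) + f^\- (X w) * g^\+ (Y w))%R.
have iA : P.-integrable D (EFin \o A) by exact: (integrableD mD ipp inn).
have iB : P.-integrable D (EFin \o B) by exact: (integrableD mD ipn inp).
have eqF : (fun w => (f (X w) * g (Y w))%:E) = (fun w => (A w)%:E - (B w)%:E).
  by apply/funext => w; rewrite eqf.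
rewrite eqF; split; first exact: (integrableB mD iA iB).
rewrite (integralB_EFin (f1 := A) (f2 := B)) //.
have -> : \int[P]_(w in D) (A w)%:E =
   \int[P]_(w in D) (f^\+ (X w) * g^\+ (Y w))%:E +
   \int[P]_(w in D) (f^\- (X w) * g^\- (Y w))%:E.
  exact: (integralD_EFin (f1 := fun w => (f^\+ (X w) * g^\+ (Y w))%R)
     (f2 := fun w => (f^\- (X w) * g^\- (Y w))%R) mD ipp inn).
have -> : \int[P]_(w in D) (B w)%:E =
   \int[P]_(w in D) (f^\+ (X w) * g^\- (Y w))%:E +
   \int[P]_(w in D) (f^\- (X w) * g^\+ (Y w))%:E.
  exact: (integralD_EFin (f1 := fun w => (f^\+ (X w) * g^\- (Y w))%R)
     (f2 := fun w => (f^\- (X w) * g^\+ (Y w))%R) mD ipn inp).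
rewrite Epp Enn Epn Enp (intB f fi) (intB g gi).
rewrite -!EFinD; congr EFin; ring.
Qed.

End tools.

Local Open Scope ring_scope.
Lemma abs_le_sq {R : realType} (x : R) : (`|x| <= 1 + x ^+ 2)%R.
Proof.
rewrite -(real_normK (num_real x)); set y := `|x|.
have y0 : 0 <= y by exact: normr_ge0.
have := sqr_ge0 (y - 1); nra.
Qed.
Lemma ab_le {R : realType} (a b : R) : `|a * b| <= a ^+ 2 + b ^+ 2.
Proof.
rewrite normrM -(real_normK (num_real a)) -(real_normK (num_real b)).
have := sqr_ge0 (`|a| - `|b|); have := normr_ge0 a; have := normr_ge0 b; nra.
Qed.
Lemma sq_add {R : realType} (a b : R) : (a + b) ^+ 2 <= 2 * a ^+ 2 + 2 * b ^+ 2.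
Proof. have := sqr_ge0 (a - b); nra. Qed.
Lemma sq_w {R : realType} (a c : R) : (2 * a - c) ^+ 2 <= 8 * a ^+ 2 + 2 * c ^+ 2.
Proof. have := sqr_ge0 (2 * a + c); nra. Qed.
Local Open Scope ereal_scope.

Lemma int_ext {R : realType} d (T : measurableType d) (mu : {measure set T -> \bar R})
  (D : set T) (f g : T -> \bar R) :
  mu.-integrable D f -> (forall x, f x = g x) -> mu.-integrable D g.
Proof. by move=> fi fg; have -> : g = f by apply/funext => x; rewrite fg. Qed.

Section sqi.
Context {R : realType} d (T : measurableType d) (m : probability T R).

Definition sqi (h : T -> R) := measurable_fun setT h /\
  m.-integrable setT (fun z => (h z ^+ 2)%:E).


Lemma cst_int (k : R) : m.-integrable setT (fun _ => k%:E).
Proof. exact: (finite_measure_integrable_cst _ k measurableT). Qed.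

Lemma sqi_int h : sqi h -> m.-integrable setT (EFin \o h).
Proof.
move=> [mh hi].
have i1 : m.-integrable setT (fun z => (1 + h z ^+ 2)%:E).
  exact: (integrableD measurableT (cst_int 1) hi).
apply: (le_integrable measurableT _ _ i1).
  exact/measurable_EFinP.
move=> z _ /=; rewrite !lee_fin (ger0_norm (_ : (0 <= 1 + h z ^+ 2)%R)).
  exact: abs_le_sq.
by rewrite addr_ge0 // sqr_ge0.
Qed.

Lemma sqi_mul h g : sqi h -> sqi g -> m.-integrable setT (fun z => (h z * g z)%:E).
Proof.
move=> [mh hi] [mg gi].
have i1 : m.-integrable setT (fun z => (h z ^+ 2 + g z ^+ 2)%:E).
  exact: (integrableD measurableT hi gi).
apply: (le_integrable measurableT _ _ i1).
  by apply/measurable_EFinP; exact: measurable_funM.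
move=> z _ /=; rewrite !lee_fin (ger0_norm (_ : (0 <= h z ^+ 2 + g z ^+ 2)%R)).
  exact: ab_le.
by rewrite addr_ge0 // sqr_ge0.
Qed.

Lemma sqi_cst k : sqi (fun _ => k).
Proof. split; [exact: measurable_cst | exact: cst_int]. Qed.

Lemma sqi_add h g : sqi h -> sqi g -> sqi (fun z => (h z + g z)%R).
Proof.
move=> [mh hi] [mg gi]; split; first exact: measurable_funD.
have i1 : m.-integrable setT (fun z => (2 * h z ^+ 2 + 2 * g z ^+ 2)%:E).
  have := integrableD measurableT (integrableZl measurableT 2%R hi) (integrableZl measurableT 2%R gi).
  by move/int_ext; apply.
apply: (le_integrable measurableT _ _ i1).
  by apply/measurable_EFinP; apply: measurable_funX; exact: measurable_funD.
move=> z _ /=; rewrite !lee_fin ger0_norm ?sqr_ge0 // ger0_norm; first exact: sq_add.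
by rewrite addr_ge0 // mulr_ge0 // sqr_ge0.
Qed.

Lemma sqi_scale k h : sqi h -> sqi (fun z => (k * h z)%R).
Proof.
move=> [mh hi]; split; first exact: measurable_funM (measurable_cst _) mh.
have -> : (fun z => ((k * h z) ^+ 2)%:E) = (fun z => (k ^+ 2)%:E * (h z ^+ 2)%:E).
  by apply/funext => z; rewrite exprMn.
exact: (integrableZl measurableT (k ^+ 2) hi).
Qed.

End sqi.

Section selfK.
Context {R : realType} d (T : measurableType d) (P : probability T R).

Lemma K2s d' (Y : measurableType d') (X : T -> Y) (mX : measurable_fun setT X)
  (D : set T) (mD : measurable D) (c : R) (c0 : (0 <= c)%R)
  (hyp : forall A, measurable A -> P (D `&` X @^-1` A) = c%:E * P (X @^-1` A))
  (f : Y -> R) (mf : measurable_fun setT f)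
  (fi : P.-integrable setT (fun w => (f (X w))%:E)) :
  P.-integrable D (fun w => (f (X w))%:E) /\
  \int[P]_(w in D) (f (X w))%:E = c%:E * \int[P]_w (f (X w))%:E.
Proof.
have mf' : measurable_fun setT (EFin \o f) by exact/measurable_EFinP.
have fi0 : P.-integrable (X @^-1` setT) ((EFin \o f) \o X) by rewrite preimage_setT.
have fi' := integrable_pushforward mX mf' fi0 measurableT.
have [H1 H2] := K2 mX mD c0 (m := pushforward P X) hyp fi'.
split => //; rewrite H2; congr (_ * _).
by rewrite integral_pushforward // preimage_setT.
Qed.

End selfK.

Section indep.
Context {R : realType} d (T : measurableType d) (P : probability T R).

Lemma bigcap_one (n : nat) (F : 'I_n -> set T) i :
  (forall k, k != i -> F k = setT) -> \bigcap_k F k = F i.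
Proof.
move=> HF; apply/seteqP; split => w.
  by move=> /(_ i I).
move=> Fi k _; have [->//|ki] := eqVneq k i.
by rewrite HF.
Qed.

Lemma bigcap_two (n : nat) (F : 'I_n -> set T) i j : i != j ->
  (forall k, k != i -> k != j -> F k = setT) -> \bigcap_k F k = F i `&` F j.
Proof.
move=> ij HF; apply/seteqP; split => w.
  by move=> H; split; [exact: (H i I)|exact: (H j I)].
move=> [Fi Fj] k _; have [->//|ki] := eqVneq k i.
have [->//|kj] := eqVneq k j.
by rewrite HF.
Qed.

Lemma ind1 dZ (Z : measurableType dZ) (mu : probability Z R) (b : nat)
  (coin : T -> bool) (batch : 'I_b -> T -> Z)
  (Hind : indep_coin_batch P coin batch)
  (Hlaw : forall i (A : set Z), measurable A -> P (batch i @^-1` A) = mu A)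
  B i A : measurable A ->
  P (coin @^-1` B `&` batch i @^-1` A) = P (coin @^-1` B) * mu A.
Proof.
move=> mA.
have := Hind B (fun k => if k == i then A else setT).
rewrite (@bigcap_one _ _ i); last by move=> k /negbTE ->; rewrite preimage_setT.
rewrite eqxx => ->; last by move=> k; case: ifP.
rewrite (bigD1 i) //= eqxx big1 ?mule1 ?Hlaw //.
by move=> k /negbTE ->; rewrite preimage_setT probability_setT.
Qed.

Lemma ind2 dZ (Z : measurableType dZ) (mu : probability Z R) (b : nat)
  (coin : T -> bool) (batch : 'I_b -> T -> Z)
  (Hind : indep_coin_batch P coin batch)
  (Hlaw : forall i (A : set Z), measurable A -> P (batch i @^-1` A) = mu A)
  B i j A A' : i != j -> measurable A -> measurable A' ->
  P (coin @^-1` B `&` batch i @^-1` A `&` batch j @^-1` A')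
   = P (coin @^-1` B) * (mu A * mu A').
Proof.
move=> ij mA mA'.
have ji : (j == i) = false by rewrite eq_sym; exact: negbTE.
have := Hind B (fun k => if k == i then A else if k == j then A' else setT).
rewrite (@bigcap_two _ _ i j) //; last first.
  by move=> k /negbTE -> /negbTE ->; rewrite preimage_setT.
rewrite eqxx ji eqxx.
rewrite setIA => ->; last by move=> k; case: ifP => //; case: ifP.
rewrite (bigD1 i) //= eqxx (bigD1 j) /=; last by rewrite ji.
rewrite ji eqxx big1 ?mule1 ?Hlaw //.
by move=> k /andP[/negbTE -> /negbTE ->]; rewrite preimage_setT probability_setT.
Qed.

Lemma indS (p : nat) (coin : T -> bool) (V : T -> 'rV[R]_p)
  (Hind : indep_coin_vec P coin V) B j A : measurable A ->
  P (coin @^-1` B `&` (fun w => V w ord0 j) @^-1` A)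
   = P (coin @^-1` B) * P ((fun w => V w ord0 j) @^-1` A).
Proof.
move=> mA.
have := Hind B (fun k => if k == j then A else setT).
rewrite (@bigcap_one _ _ j); last by move=> k /negbTE ->; rewrite preimage_setT.
rewrite eqxx => ->; last by move=> k; case: ifP.
done.
Qed.

End indep.

Section lin.
Context {R : realType} d (T : measurableType d) (m : probability T R)
  (D : set T) (mD : measurable D).

Definition IE (f : T -> R) := m.-integrable D (fun w => (f w)%:E).

Lemma iDint f g : IE f -> IE g -> IE (fun w => (f w + g w)%R).
Proof. by move=> fi gi; apply: int_ext (integrableD mD fi gi) _ => w. Qed.

Lemma iZint k f : IE f -> IE (fun w => (k * f w)%R).
Proof. by move=> fi; apply: int_ext (integrableZl mD k fi) _ => w. Qed.

Lemma iCint c : IE (fun _ => c).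
Proof. exact: (finite_measure_integrable_cst _ c mD). Qed.

Lemma iNint f : IE f -> IE (fun w => (- f w)%R).
Proof. by move=> fi; apply: int_ext (iZint (-1) fi) _ => w; rewrite mulN1r. Qed.

Lemma iSint n (F : 'I_n -> T -> R) : (forall i, IE (F i)) ->
  IE (fun w => (\sum_(i < n) F i w)%R).
Proof.
move=> Fi; have := @integrable_sum _ _ _ m D mD _ (index_enum (ordinal n)) xpredT (fun i w => (F i w)%:E) (fun i _ => Fi i).
by move/int_ext; apply => w; rewrite sumEFin.
Qed.

Lemma iD f g x y : IE f -> IE g ->
  \int[m]_(w in D) (f w)%:E = x%:E -> \int[m]_(w in D) (g w)%:E = y%:E ->
  \int[m]_(w in D) (f w + g w)%:E = (x + y)%:E.
Proof.
move=> fi gi fx gy.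
rewrite EFinD; have := integralD_EFin mD fi gi; rewrite /= fx gy => <-.
by apply: eq_integral => w.
Qed.

Lemma iZ k f x : IE f -> \int[m]_(w in D) (f w)%:E = x%:E ->
  \int[m]_(w in D) (k * f w)%:E = (k * x)%:E.
Proof.
move=> fi fx; rewrite EFinM; have := integralZl mD fi k; rewrite fx => <-.
by apply: eq_integral => w.
Qed.

Lemma iN f x : IE f -> \int[m]_(w in D) (f w)%:E = x%:E ->
  \int[m]_(w in D) (- f w)%:E = (- x)%:E.
Proof.
move=> fi fx; have := iZ (-1) fi fx; rewrite mulN1r => <-.
by apply: eq_integral => w; rewrite mulN1r.
Qed.

Lemma iC c y : m D = y%:E -> \int[m]_(w in D) c%:E = (c * y)%:E.
Proof. by move=> my; rewrite (integral_cst m mD c%:E) EFinM; congr (_ * _); exact: my. Qed.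

Lemma iS n (F : 'I_n -> T -> R) (r : 'I_n -> R) : (forall i, IE (F i)) ->
  (forall i, \int[m]_(w in D) (F i w)%:E = (r i)%:E) ->
  \int[m]_(w in D) (\sum_(i < n) F i w)%:E = (\sum_(i < n) r i)%:E.
Proof.
move=> Fi Fr.
under eq_integral do rewrite -sumEFin.
rewrite (integral_sum mD Fi) -sumEFin.
by apply: eq_bigr => i _; rewrite Fr.
Qed.

End lin.

Section batchvar.
Context {R : realType} d (T : measurableType d) (P : probability T R).
Local Open Scope ring_scope.

Lemma batch_var dZ (Z : measurableType dZ) (mu : probability Z R) (b : nat)
  (Hb : (0 < b)%N) (batch : 'I_b -> T -> Z)
  (mb : forall i, measurable_fun setT (batch i))
  (D : set T) (mD : measurable D) (c : R) (c0 : 0 <= c)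
  (h1 : forall i A, measurable A -> P (D `&` batch i @^-1` A) = (c%:E * mu A)%E)
  (h2 : forall i k A A', i != k -> measurable A -> measurable A' ->
     P (D `&` batch i @^-1` A `&` batch k @^-1` A') = (c%:E * (mu A * mu A'))%E)
  (f : Z -> R) (fs : sqi mu f) (f0 : (\int[mu]_z (f z)%:E = 0)%E) (a : R) :
  (\int[P]_(w in D) ((a + b%:R^-1 * \sum_(i < b) f (batch i w)) ^+ 2)%:E
   = (c * (a ^+ 2 + b%:R^-1 * fine (\int[mu]_z (f z ^+ 2)%:E)))%:E)%E.
Proof.
have b0 : b%:R != 0 :> R by rewrite pnatr_eq0 -lt0n.
pose V := fine (\int[mu]_z (f z ^+ 2)%:E).
have fi := sqi_int fs.
have f2i : mu.-integrable setT (EFin \o (fun z => f z ^+ 2)) by case: fs.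
have PD : P D = c%:E.
  have := h1 (Ordinal Hb) setT measurableT.
  by rewrite preimage_setT setIT probability_setT mule1.
have Ki i := K2 (mb i) mD c0 (h1 i) fi.
have Ki2 i := K2 (mb i) mD c0 (h1 i) f2i.
have iuu : forall i k, IE P D (fun w => f (batch i w) * f (batch k w)) /\
   (\int[P]_(w in D) (f (batch i w) * f (batch k w))%:E
      = (if i == k then c * V else 0)%:E)%E.
  move=> i k; have [<-|ik] := eqVneq i k.
    have [I1 I2] := Ki2 i; split.
      by apply: int_ext I1 _ => w /=; rewrite expr2.
    rewrite EFinM /V -(fin_int measurableT f2i) -I2.
    by apply: eq_integral => w _ /=; rewrite expr2.
  have [I1 I2] := K4 (mb i) (mb k) mD c0 (fun A A' mA mA' => h2 i k A A' ik mA mA') fi fi.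
  split => //; rewrite I2.
  by rewrite f0 /= mul0r mulr0.
have iu i : IE P D (fun w => f (batch i w)) /\
    (\int[P]_(w in D) (f (batch i w))%:E = 0%:E)%E.
  by have [I1 I2] := Ki i; split => //; rewrite I2 f0 mule0.
have -> : (fun w => ((a + b%:R^-1 * \sum_(i < b) f (batch i w)) ^+ 2)%:E) =
  (fun w => (a ^+ 2 + \sum_(i < b) (2 * a * b%:R^-1) * f (batch i w)
     + \sum_(i < b) \sum_(k < b) (b%:R^-2) * (f (batch i w) * f (batch k w)))%:E).
  apply/funext => w; congr EFin.
  set s := \sum_(i < b) f (batch i w).
  have -> : \sum_(i < b) (2 * a * b%:R^-1) * f (batch i w) = (2 * a * b%:R^-1) * s.
    by rewrite mulr_sumr.
  have -> : \sum_(i < b) \sum_(k < b) (b%:R^-2) * (f (batch i w) * f (batch k w))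
      = b%:R^-2 * (s * s).
    rewrite big_distrlr mulr_sumr; apply: eq_bigr => i _.
    by rewrite mulr_sumr.
  by field.
set k1 := 2 * a * b%:R^-1.
have int1 := iCint P mD (a ^+ 2).
have int2 : IE P D (fun w => \sum_(i < b) k1 * f (batch i w)).
  exact: (iSint mD (fun i => iZint mD k1 (iu i).1)).
have int3 : IE P D (fun w => \sum_(i < b) \sum_(k < b)
    b%:R^-2 * (f (batch i w) * f (batch k w))).
  apply: (iSint mD) => i; apply: (iSint mD) => k.
  exact: (iZint mD _ (iuu i k).1).
have T1 := iC mD (a ^+ 2) PD.
have T2 : (\int[P]_(w in D) (\sum_(i < b) k1 * f (batch i w))%:E
    = (\sum_(i < b) k1 * 0)%:E)%E.
  apply: (iS mD (F := fun i w => k1 * f (batch i w))).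
    by move=> i; exact: (iZint mD k1 (iu i).1).
  by move=> i; exact: (iZ mD k1 (iu i).1 (iu i).2).
have T3 : (\int[P]_(w in D) (\sum_(i < b) \sum_(k < b)
    b%:R^-2 * (f (batch i w) * f (batch k w)))%:E
    = (\sum_(i < b) \sum_(k < b) b%:R^-2 * (if i == k then c * V else 0))%:E)%E.
  apply: (iS mD (F := fun i w => \sum_(k < b) b%:R^-2 * (f (batch i w) * f (batch k w)))).
    move=> i; apply: (iSint mD) => k.
    exact: (iZint mD _ (iuu i k).1).
  move=> i; apply: (iS mD (F := fun k w => b%:R^-2 * (f (batch i w) * f (batch k w)))).
    by move=> k; exact: (iZint mD _ (iuu i k).1).
  by move=> k; exact: (iZ mD _ (iuu i k).1 (iuu i k).2).
rewrite (iD mD (iDint mD int1 int2) int3 (iD mD int1 int2 T1 T2) T3).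
congr EFin.
rewrite big1; last by move=> i _; rewrite mulr0.
have -> : \sum_(i < b) \sum_(k < b) b%:R^-2 * (if i == k then c * V else 0)
    = \sum_(i < b) b%:R^-2 * (c * V).
  apply: eq_bigr => i _; rewrite (bigD1 i) //= eqxx big1 ?addr0 //.
  by move=> k /negbTE; rewrite eq_sym => ->; rewrite mulr0.
rewrite sumr_const card_ord -mulr_natr /V.
by field.
Qed.

End batchvar.

Section sqcoord.
Context {R : realType} d (T : measurableType d) (m : probability T R).
Local Open Scope ring_scope.

Lemma sqnorm_ge0 (p : nat) (v : 'rV[R]_p) : 0 <= sqnorm v.
Proof. by apply: sumr_ge0 => j _; exact: sqr_ge0. Qed.

Lemma measurable_sqnorm (p : nat) (F : T -> 'rV[R]_p)
  (mF : forall j, measurable_fun setT (fun z => F z ord0 j)) :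
  measurable_fun setT (fun z => sqnorm (F z)).
Proof.
rewrite /sqnorm; apply: (measurable_sum (index_enum _) (h := fun j z => (F z ord0 j) ^+ 2)).
by move=> j; apply: measurable_funX; exact: mF.
Qed.

Lemma sqnorm_int (p : nat) (F : T -> 'rV[R]_p)
  (mF : forall j, measurable_fun setT (fun z => F z ord0 j))
  (H : (\int[m]_z (sqnorm (F z))%:E < +oo)%E) :
  m.-integrable setT (fun z => (sqnorm (F z))%:E).
Proof.
apply/integrableP; split; first exact/measurable_EFinP/measurable_sqnorm.
by under eq_integral do rewrite gee0_abs ?lee_fin ?sqnorm_ge0 //.
Qed.

Lemma sq_coord_sqi (p : nat) (F : T -> 'rV[R]_p)
  (mF : forall j, measurable_fun setT (fun z => F z ord0 j))
  (H : (\int[m]_z (sqnorm (F z))%:E < +oo)%E) j :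
  sqi m (fun z => F z ord0 j).
Proof.
split; first exact: mF.
apply: (le_integrable measurableT _ _ (sqnorm_int mF H)).
  by apply/measurable_EFinP; apply: measurable_funX; exact: mF.
move=> z _; rewrite !gee0_abs ?lee_fin ?sqnorm_ge0 ?sqr_ge0 //.
rewrite /sqnorm (bigD1 j) //= lerDl.
by apply: sumr_ge0 => k _; exact: sqr_ge0.
Qed.

End sqcoord.

Lemma sqi_ext {R : realType} d (T : measurableType d) (m : probability T R) (f g : T -> R) :
  sqi m f -> (forall z, f z = g z) -> sqi m g.
Proof. by move=> fs fg; have -> : g = f by apply/funext => z; rewrite fg. Qed.

Lemma iS0 {R : realType} d (T : measurableType d) (m : {measure set T -> \bar R})
  (D : set T) (mD : measurable D) n (F : 'I_n -> T -> R) (r : 'I_n -> R) :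
  (forall i, measurable_fun setT (F i)) -> (forall i w, (0 <= F i w)%R) ->
  (forall i, \int[m]_(w in D) (F i w)%:E = (r i)%:E) ->
  \int[m]_(w in D) (\sum_(i < n) F i w)%:E = (\sum_(i < n) r i)%:E.
Proof.
move=> mF F0 Fr.
under eq_integral do rewrite -sumEFin.
rewrite ge0_integral_sum //; last 2 first.
- move=> i; apply/measurable_EFinP; exact: measurable_funS (mF i).
- by move=> i w _; rewrite lee_fin.
rewrite -sumEFin; apply: eq_bigr => i _; exact: Fr.
Qed.

Local Close Scope ereal_scope.
Local Open Scope ring_scope.
Lemma ek_coord (R : realType) (p : nat) (T Z : Type) (b : nat) (Hb : (0 < b)%N)
  (Gs : 'rV[R]_p -> Z -> 'rV[R]_p) (G : 'rV[R]_p -> 'rV[R]_p)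
  (coin : T -> bool) (batch : 'I_b -> T -> Z) (Sbar : T -> 'rV[R]_p)
  (Sprev xk xk1 xk2 : 'rV[R]_p) w j :
  (vr_estimator Gs coin batch Sbar Sprev xk xk1 xk2 w - (2%:R *: G xk - G xk1)) ord0 j
  = if coin w then Sbar w ord0 j - (2 * G xk ord0 j - G xk1 ord0 j)
    else (Sprev - (2%:R *: G xk1 - G xk2)) ord0 j + b%:R^-1 *
      \sum_(i < b) (2 * Gs xk (batch i w) ord0 j - 3 * Gs xk1 (batch i w) ord0 j
          + Gs xk2 (batch i w) ord0 j
          - (2 * G xk ord0 j - 3 * G xk1 ord0 j + G xk2 ord0 j)).
Proof.
rewrite /vr_estimator; case: (coin w); rewrite !mxE //.
rewrite /batch_avg !summxE.
rewrite sumrB !big_split /= -!mulr_sumr sumr_const card_ord.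
have b0 : b%:R != 0 :> R by rewrite pnatr_eq0 -lt0n.
rewrite !sumrN.
have -> : \sum_(i < b) 3 * Gs xk1 (batch i w) ord0 j = 3 * \sum_(i < b) Gs xk1 (batch i w) ord0 j.
  by rewrite mulr_sumr.
rewrite !sumr_const !card_ord.
rewrite -[G xk ord0 j *+ b]mulr_natr -[3 * G xk1 ord0 j *+ b]mulr_natr -[G xk2 ord0 j *+ b]mulr_natr.
set s1 := \sum_(i < b) Gs xk (batch i w) ord0 j.
set s2 := \sum_(i < b) Gs xk1 (batch i w) ord0 j.
set s3 := \sum_(i < b) Gs xk2 (batch i w) ord0 j.
by field.
Qed.

Theorem mainTheorem7
  (R : realType) (p : nat)
  (* distribution of zeta and the stochastic oracle (setting (E)) *)
  (dZ : measure_display) (Z : measurableType dZ) (mu : probability Z R)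
  (Gs : 'rV[R]_p -> Z -> 'rV[R]_p) (G : 'rV[R]_p -> 'rV[R]_p)
  (sigma L : R)
  (HGs_meas : forall x j, measurable_fun setT (fun z => Gs x z ord0 j))
  (HGs_int : forall x j, mu.-integrable setT (fun z => (Gs x z ord0 j)%:E))
  (HG : forall x j, (G x ord0 j)%:E = ('E_mu[fun z => Gs x z ord0 j])%E)
  (HAb : forall x, ('E_mu[fun z => sqnorm (Gs x z - G x)] <= (sigma ^+ 2)%:E)%E)
  (HAc : forall x y,
     ('E_mu[fun z => sqnorm (Gs x z - Gs y z)] <= (L ^+ 2 * sqnorm (x - y))%:E)%E)
  (* parameters *)
  (pp : R) (b : nat) (Hpp : 0 < pp <= 1) (Hb : (0 < b)%N)
  (* past (F_k-measurable) data: x^k, x^{k-1}, x^{k-2}, Stilde^{k-1} *)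
  (xk xk1 xk2 Sprev : 'rV[R]_p) (sigmak : R)
  (* fresh randomness of iteration k *)
  (d : measure_display) (T : measurableType d) (P : probability T R)
  (coin : T -> bool) (batch : 'I_b -> T -> Z) (Sbar : T -> 'rV[R]_p)
  (Hcoin_meas : measurable_fun setT coin)
  (Hcoin_law : P (coin @^-1` [set true]) = pp%:E)
  (Hbatch_meas : forall i, measurable_fun setT (batch i))
  (Hbatch_law : forall i (A : set Z), measurable A ->
     P (batch i @^-1` A) = mu A)
  (Hindep_batch : indep_coin_batch P coin batch)
  (HSbar_meas : forall j, measurable_fun setT (fun w => Sbar w ord0 j))
  (Hindep_Sbar : indep_coin_vec P coin Sbar)
  (HSbar_mean : forall j, ('E_P[fun w => Sbar w ord0 j])%E
       = ((2%:R *: G xk - G xk1) ord0 j)%:E)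
  (HSbar_var : ('E_P[fun w => sqnorm (Sbar w - (2%:R *: G xk - G xk1))]
       <= (sigmak ^+ 2)%:E)%E) :
  let Sk := 2%:R *: G xk - G xk1 in
  let Skm1 := 2%:R *: G xk1 - G xk2 in
  let ek := fun w => vr_estimator Gs coin batch Sbar Sprev xk xk1 xk2 w - Sk in
  let Deltak := fun w => sqnorm (ek w) in
  let ekm1 := Sprev - Skm1 in
  classB_step P ek Deltak ekm1 (sqnorm ekm1) xk xk1 xk2
    pp pp (8%:R * (1 - pp) * L ^+ 2 / b%:R) (2%:R * (1 - pp) * L ^+ 2 / b%:R)
    (pp * sigmak ^+ 2).
Proof.
move=> Sk Skm1 ek Deltak ekm1.
have [pp0 pp1] := andP Hpp.
have b0 : (0 < b%:R :> R)%R by rewrite ltr0n.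
pose C := coin @^-1` [set true].
pose Cn := coin @^-1` [set false].
have mC : measurable C by rewrite -[C]setTI; apply: Hcoin_meas.
have mCn : measurable Cn by rewrite -[Cn]setTI; apply: Hcoin_meas.
have PC : P C = pp%:E := Hcoin_law.
have PCn : P Cn = (1 - pp)%:E.
  have -> : Cn = ~` C.
    by apply/seteqP; split => w; rewrite /C /Cn /=; case: (coin w).
  by rewrite probability_setC // PC.
have CU : C `|` Cn = setT.
  by apply/seteqP; split => w // _; rewrite /C /Cn /=; case: (coin w); [left|right].
have Cdis : [disjoint C & Cn].
  by rewrite disj_set2E; apply/eqP/seteqP; split => w // []; rewrite /C /Cn /= => ->.
pose sk j := (2 * G xk ord0 j - G xk1 ord0 j)%R.
pose mj j := (2 * G xk ord0 j - 3 * G xk1 ord0 j + G xk2 ord0 j)%R.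
pose v j z := (2 * Gs xk z ord0 j - 3 * Gs xk1 z ord0 j + Gs xk2 z ord0 j - mj j)%R.
have ecoord : forall w j, ek w ord0 j = if coin w then (Sbar w ord0 j - sk j)%R
    else (ekm1 ord0 j + b%:R^-1 * \sum_(i < b) v j (batch i w))%R.
  by move=> w j; exact: ek_coord.
have hG : forall x j, (\int[mu]_z (Gs x z ord0 j)%:E = (G x ord0 j)%:E)%E.
  by move=> x j; rewrite HG unlock.
have sqG : forall x j, sqi mu (fun z => Gs x z ord0 j).
  move=> x j.
  have mF : forall j, measurable_fun setT (fun z => (Gs x z - G x) ord0 j).
    move=> k; have -> : (fun z => (Gs x z - G x) ord0 k) =
        (fun z => Gs x z ord0 k - G x ord0 k)%R by apply/funext => z; rewrite !mxE.
    exact: measurable_funB (HGs_meas x k) (measurable_cst _).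
  have fin : (\int[mu]_z (sqnorm (Gs x z - G x))%:E < +oo)%E.
    by move: (HAb x); rewrite unlock => H; apply: le_lt_trans H _; rewrite ltry.
  have := sqi_add (sq_coord_sqi mF fin j) (sqi_cst mu (G x ord0 j)).
  by move/sqi_ext; apply => z; rewrite !mxE subrK.
have sqv : forall j, sqi mu (v j).
  move=> j.
  have := sqi_add (sqi_add (sqi_add (sqi_scale 2 (sqG xk j)) (sqi_scale (-3) (sqG xk1 j)))
     (sqG xk2 j)) (sqi_cst mu (- mj j)).
  by move/sqi_ext; apply => z; rewrite /v; ring.
have Ev0 : forall j, (\int[mu]_z (v j z)%:E = 0)%E.
  move=> j.
  transitivity (\int[mu]_z ((2 * Gs xk z ord0 j + (-3) * Gs xk1 z ord0 j
      + Gs xk2 z ord0 j) + - mj j)%:E)%E.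
    by apply: eq_integral => z _; congr EFin; rewrite /v; ring.
  have i1 := sqi_int (sqG xk j).
  have i2 := sqi_int (sqG xk1 j).
  have i3 := sqi_int (sqG xk2 j).
  rewrite (iD measurableT (iDint measurableT (iDint measurableT (iZint measurableT 2 i1)
      (iZint measurableT (-3) i2)) i3) (iCint mu measurableT (- mj j))
    (iD measurableT (iDint measurableT (iZint measurableT 2 i1) (iZint measurableT (-3) i2)) i3
      (iD measurableT (iZint measurableT 2 i1) (iZint measurableT (-3) i2)
        (iZ measurableT 2 i1 (hG xk j)) (iZ measurableT (-3) i2 (hG xk1 j))) (hG xk2 j))
    (iC measurableT (- mj j) (probability_setT mu))).
  by congr EFin; rewrite /mj; ring.
have sqS : forall j, sqi P (fun w => Sbar w ord0 j - sk j)%R.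
  move=> j.
  have mF : forall j, measurable_fun setT
      (fun w => (Sbar w - (2%:R *: G xk - G xk1)) ord0 j).
    move=> k; have -> : (fun w => (Sbar w - (2%:R *: G xk - G xk1)) ord0 k) =
        (fun w => Sbar w ord0 k - sk k)%R by apply/funext => w; rewrite !mxE.
    exact: measurable_funB (HSbar_meas k) (measurable_cst _).
  have fin : (\int[P]_w (sqnorm (Sbar w - (2%:R *: G xk - G xk1)))%:E < +oo)%E.
    by move: HSbar_var; rewrite unlock => H; apply: le_lt_trans H _; rewrite ltry.
  by move/sqi_ext: (sq_coord_sqi mF fin j); apply => w; rewrite !mxE.
have ESk : forall j, (\int[P]_w (Sbar w ord0 j - sk j)%:E = 0)%E.
  move=> j.
  have iS : IE P setT (fun w => Sbar w ord0 j).
    have := sqi_int (sqi_add (sqS j) (sqi_cst P (sk j))).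
    by move/int_ext; apply => w /=; rewrite subrK.
  have hS : (\int[P]_w (Sbar w ord0 j)%:E = (sk j)%:E)%E.
    by move: (HSbar_mean j); rewrite unlock => ->; rewrite !mxE.
  rewrite (iD measurableT iS (iCint P measurableT (- sk j)) hS
     (iC measurableT (- sk j) (probability_setT P))).
  by rewrite mulr1 subrr.
have c0' : (0 <= 1 - pp)%R by rewrite subr_ge0.
have h1 : forall i A, measurable A ->
    P (Cn `&` batch i @^-1` A) = ((1 - pp)%:E * mu A)%E.
  by move=> i A mA; rewrite (ind1 Hindep_batch Hbatch_law) // PCn.
have h2 : forall i k A A', i != k -> measurable A -> measurable A' ->
    P (Cn `&` batch i @^-1` A `&` batch k @^-1` A') = ((1 - pp)%:E * (mu A * mu A'))%E.
  by move=> i k A A' ik mA mA'; rewrite (ind2 Hindep_batch Hbatch_law) // PCn.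
have hS1 : forall j A, measurable A ->
    P (C `&` (fun w => Sbar w ord0 j) @^-1` A)
    = (pp%:E * P ((fun w => Sbar w ord0 j) @^-1` A))%E.
  by move=> j A mA; rewrite (indS Hindep_Sbar) // PC.
have mv : forall j, measurable_fun setT (v j) by move=> k; case: (sqv k).
have mB : forall j, measurable_fun setT
    (fun w => ekm1 ord0 j + b%:R^-1 * \sum_(i < b) v j (batch i w))%R.
  move=> j; apply: measurable_funD; first exact: measurable_cst.
  apply: measurable_funM; first exact: measurable_cst.
  apply: (measurable_sum (index_enum _) (h := fun i w => v j (batch i w))) => i.
  exact: measurableT_comp (mv j) (Hbatch_meas i).
have mA : forall j, measurable_fun setT (fun w => Sbar w ord0 j - sk j)%R.
  by move=> j; exact: measurable_funB (HSbar_meas j) (measurable_cst _).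
have mej : forall j, measurable_fun setT (fun w => ek w ord0 j).
  move=> j.
  have -> : (fun w => ek w ord0 j) = (fun w => if coin w then (Sbar w ord0 j - sk j)%R
      else (ekm1 ord0 j + b%:R^-1 * \sum_(i < b) v j (batch i w))%R).
    by apply/funext => w; rewrite ecoord.
  exact: measurable_fun_ifT.
rewrite /classB_step; split.
  split => //.
  - by rewrite mulr_ge0 // ?invr_ge0 ?ler0n // mulr_ge0 // ?sqr_ge0 // mulr_ge0.
  - by rewrite mulr_ge0 // ?invr_ge0 ?ler0n // mulr_ge0 // ?sqr_ge0 // mulr_ge0.
  - by rewrite mulr_ge0 // ?sqr_ge0 // ltW.
split.
- by split; [move=> w; exact: sqnorm_ge0 | exact: sqnorm_ge0].
- move=> j; rewrite unlock.
  have mej' := mej j.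
  rewrite -CU integral_setU //; last by rewrite CU; exact/measurable_EFinP/mej'.
  have EC : (\int[P]_(w in C) (ek w ord0 j)%:E = 0%:E)%E.
    transitivity (\int[P]_(w in C) (Sbar w ord0 j - sk j)%:E)%E.
      apply: eq_integral => w; rewrite inE => Cw.
      by rewrite ecoord (_ : coin w = true).
    have [_ ->] := K2s (HSbar_meas j) mC (ltW pp0) (hS1 j)
      (f := fun y => y - sk j)%R (measurable_funB (@measurable_id _ _ setT) (measurable_cst _))
      (sqi_int (sqS j)).
    by rewrite ESk mule0.
  have Kb : forall i, IE P Cn (fun w => v j (batch i w)) /\
      (\int[P]_(w in Cn) (v j (batch i w))%:E = (0:R)%:E)%E.
    move=> i; have [I1 I2] := K2 (Hbatch_meas i) mCn c0' (h1 i) (sqi_int (sqv j)).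
    by split => //; rewrite I2 Ev0 mule0.
  have ECn : (\int[P]_(w in Cn) (ek w ord0 j)%:E = (ekm1 ord0 j * (1 - pp))%:E)%E.
    transitivity (\int[P]_(w in Cn) (ekm1 ord0 j + b%:R^-1 * \sum_(i < b) v j (batch i w))%:E)%E.
      apply: eq_integral => w; rewrite inE => Cw.
      by rewrite ecoord (_ : coin w = false).
    rewrite (iD mCn (iCint P mCn _) (iZint mCn _ (iSint mCn (fun i => (Kb i).1)))
      (iC mCn (ekm1 ord0 j) PCn)
      (iZ mCn (b%:R^-1) (iSint mCn (fun i => (Kb i).1))
        (iS mCn (fun i => (Kb i).1) (fun i => (Kb i).2)))).
    by rewrite big1 // mulr0 addr0.
  by rewrite EC ECn add0e mulrC.
- by [].
- rewrite unlock.
  have mD : measurable_fun setT (fun w => Deltak w) := measurable_sqnorm mej.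
  rewrite -CU integral_setU //; last by rewrite CU; exact/measurable_EFinP.
  pose W j := fine (\int[P]_w ((Sbar w ord0 j - sk j) ^+ 2)%:E)%E.
  pose V j := fine (\int[mu]_z (v j z ^+ 2)%:E)%E.
  have WE : forall j, (\int[P]_w ((Sbar w ord0 j - sk j) ^+ 2)%:E = (W j)%:E)%E.
    by move=> j; exact: (fin_int measurableT (h := fun w => (Sbar w ord0 j - sk j) ^+ 2)%R (sqS j).2).
  have DC : (\int[P]_(w in C) (Deltak w)%:E = (\sum_(j < p) pp * W j)%:E)%E.
    transitivity (\int[P]_(w in C) (\sum_(j < p) (Sbar w ord0 j - sk j) ^+ 2)%:E)%E.
      apply: eq_integral => w; rewrite inE => Cw; rewrite /Deltak /sqnorm.
      by congr EFin; apply: eq_bigr => k _; rewrite ecoord (_ : coin w = true).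
    apply: (iS0 mC) => [k|k w|k].
    - exact: measurable_funX (mA k).
    - exact: sqr_ge0.
    - have [_ ->] := K2s (HSbar_meas k) mC (ltW pp0) (hS1 k)
        (f := fun y => (y - sk k) ^+ 2)%R
        (measurable_funX 2 (measurable_funB (@measurable_id _ _ setT) (measurable_cst _)))
        (sqS k).2.
      by rewrite WE.
  have DCn : (\int[P]_(w in Cn) (Deltak w)%:E
      = (\sum_(j < p) (1 - pp) * (ekm1 ord0 j ^+ 2 + b%:R^-1 * V j))%:E)%E.
    transitivity (\int[P]_(w in Cn) (\sum_(j < p)
       (ekm1 ord0 j + b%:R^-1 * \sum_(i < b) v j (batch i w)) ^+ 2)%:E)%E.
      apply: eq_integral => w; rewrite inE => Cw; rewrite /Deltak /sqnorm.
      by congr EFin; apply: eq_bigr => k _; rewrite ecoord (_ : coin w = false).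
    apply: (iS0 mCn) => [k|k w|k].
    - exact: measurable_funX (mB k).
    - exact: sqr_ge0.
    - exact: (batch_var Hb Hbatch_meas mCn c0' h1 h2 (sqv k) (Ev0 k) (ekm1 ord0 k)).
  rewrite DC DCn -EFinD lee_fin.
  have SW : (\sum_(j < p) W j <= sigmak ^+ 2)%R.
    move: HSbar_var; rewrite unlock.
    have -> : (\int[P]_w (sqnorm (Sbar w - (2%:R *: G xk - G xk1)))%:E
        = (\sum_(j < p) W j)%:E)%E.
      transitivity (\int[P]_w (\sum_(j < p) (Sbar w ord0 j - sk j) ^+ 2)%:E)%E.
        apply: eq_integral => w _; rewrite /sqnorm; congr EFin.
        by apply: eq_bigr => k _; rewrite !mxE.
      apply: (iS0 measurableT) => [k|k w|k].
      + exact: measurable_funX (mA k).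
      + exact: sqr_ge0.
      + exact: WE.
    by rewrite lee_fin.
  pose wj j z := (2 * Gs xk z ord0 j - 3 * Gs xk1 z ord0 j + Gs xk2 z ord0 j)%R.
  have sqw : forall j, sqi mu (wj j).
    move=> j.
    have := sqi_add (sqi_add (sqi_scale 2 (sqG xk j)) (sqi_scale (-3) (sqG xk1 j)))
       (sqG xk2 j).
    by move/sqi_ext; apply => z; rewrite /wj; ring.
  have hw : forall j, (\int[mu]_z (wj j z)%:E = (mj j)%:E)%E.
    move=> j.
    transitivity (\int[mu]_z (2 * Gs xk z ord0 j + (-3) * Gs xk1 z ord0 j
        + Gs xk2 z ord0 j)%:E)%E.
      by apply: eq_integral => z _; congr EFin; rewrite /wj; ring.
    have i1 := sqi_int (sqG xk j).
    have i2 := sqi_int (sqG xk1 j).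
    have i3 := sqi_int (sqG xk2 j).
    rewrite (iD measurableT (iDint measurableT (iZint measurableT 2 i1)
        (iZint measurableT (-3) i2)) i3
      (iD measurableT (iZint measurableT 2 i1) (iZint measurableT (-3) i2)
        (iZ measurableT 2 i1 (hG xk j)) (iZ measurableT (-3) i2 (hG xk1 j))) (hG xk2 j)).
    by congr EFin; rewrite /mj; ring.
  pose W2 j := fine (\int[mu]_z (wj j z ^+ 2)%:E)%E.
  have W2E : forall j, (\int[mu]_z (wj j z ^+ 2)%:E = (W2 j)%:E)%E.
    by move=> j; exact: (fin_int measurableT (h := fun z => wj j z ^+ 2)%R (sqw j).2).
  have VW : forall j, (V j <= W2 j)%R.
    move=> j.
    have i1 := sqi_int (sqw j).
    have i2 : IE mu setT (fun z => wj j z ^+ 2)%R by exact: (sqw j).2.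
    have e : (\int[mu]_z (v j z ^+ 2)%:E
        = (W2 j + (-2 * mj j) * mj j + mj j ^+ 2 * 1)%:E)%E.
      transitivity (\int[mu]_z ((wj j z ^+ 2 + (-2 * mj j) * wj j z) + mj j ^+ 2)%:E)%E.
        by apply: eq_integral => z _; congr EFin; rewrite /v /wj; ring.
      exact: (iD measurableT (iDint measurableT i2 (iZint measurableT _ i1))
         (iCint mu measurableT _)
         (iD measurableT i2 (iZint measurableT _ i1) (W2E j) (iZ measurableT _ i1 (hw j)))
         (iC measurableT _ (probability_setT mu))).
    rewrite /V e /=.
    have := sqr_ge0 (mj j); nra.
  have isqG : forall x y, mu.-integrable setT (fun z => (sqnorm (Gs x z - Gs y z))%:E).
    move=> x y; apply: sqnorm_int.
      move=> k; have -> : (fun z => (Gs x z - Gs y z) ord0 k) =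
          (fun z => Gs x z ord0 k - Gs y z ord0 k)%R by apply/funext => z; rewrite !mxE.
      exact: measurable_funB (HGs_meas x k) (HGs_meas y k).
    by move: (HAc x y); rewrite unlock => H; apply: le_lt_trans H _; rewrite ltry.
  pose E1 := fine (\int[mu]_z (sqnorm (Gs xk z - Gs xk1 z))%:E)%E.
  pose E2 := fine (\int[mu]_z (sqnorm (Gs xk1 z - Gs xk2 z))%:E)%E.
  have E1E : (\int[mu]_z (sqnorm (Gs xk z - Gs xk1 z))%:E = E1%:E)%E.
    exact: (fin_int measurableT (h := fun z => sqnorm (Gs xk z - Gs xk1 z)) (isqG xk xk1)).
  have E2E : (\int[mu]_z (sqnorm (Gs xk1 z - Gs xk2 z))%:E = E2%:E)%E.
    exact: (fin_int measurableT (h := fun z => sqnorm (Gs xk1 z - Gs xk2 z)) (isqG xk1 xk2)).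
  have E1le : (E1 <= L ^+ 2 * sqnorm (xk - xk1))%R.
    by move: (HAc xk xk1); rewrite unlock E1E lee_fin.
  have E2le : (E2 <= L ^+ 2 * sqnorm (xk1 - xk2))%R.
    by move: (HAc xk1 xk2); rewrite unlock E2E lee_fin.
  have SW2 : (\sum_(j < p) W2 j <= 8 * E1 + 2 * E2)%R.
    have L1 : (\int[mu]_z (\sum_(j < p) wj j z ^+ 2)%:E = (\sum_(j < p) W2 j)%:E)%E.
      exact: (iS measurableT (fun j => (sqw j).2) W2E).
    have R1 : (\int[mu]_z (8 * sqnorm (Gs xk z - Gs xk1 z)
        + 2 * sqnorm (Gs xk1 z - Gs xk2 z))%:E = (8 * E1 + 2 * E2)%:E)%E.
      exact: (iD measurableT (iZint measurableT 8 (isqG xk xk1))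
        (iZint measurableT 2 (isqG xk1 xk2)) (iZ measurableT 8 (isqG xk xk1) E1E)
        (iZ measurableT 2 (isqG xk1 xk2) E2E)).
    have := le_integral measurableT (iSint measurableT (fun j => (sqw j).2))
      (iDint measurableT (iZint measurableT 8 (isqG xk xk1))
        (iZint measurableT 2 (isqG xk1 xk2))).
    rewrite L1 R1 lee_fin; apply => z _; rewrite lee_fin /sqnorm !mulr_sumr -big_split /=.
    apply: ler_sum => k _; rewrite !mxE.
    have -> : wj k z = (2 * (Gs xk z ord0 k - Gs xk1 z ord0 k)
        - (Gs xk1 z ord0 k - Gs xk2 z ord0 k))%R by rewrite /wj; ring.
    exact: sq_w.
  have SV : (\sum_(j < p) V j <= 8 * (L ^+ 2 * sqnorm (xk - xk1))
      + 2 * (L ^+ 2 * sqnorm (xk1 - xk2)))%R.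
    apply: le_trans (ler_sum _ (fun j _ => VW j)) _.
    apply: le_trans SW2 _; lra.
  have e1 : (\sum_(j < p) pp * W j = pp * \sum_(j < p) W j)%R by rewrite mulr_sumr.
  have e2 : (\sum_(j < p) (1 - pp) * (ekm1 ord0 j ^+ 2 + b%:R^-1 * V j)
      = (1 - pp) * sqnorm ekm1 + (1 - pp) * b%:R^-1 * \sum_(j < p) V j)%R.
    rewrite /sqnorm [(1 - pp) * \sum_(_ < _) _]mulr_sumr [_ * \sum_(j < p) V j]mulr_sumr -big_split /=.
    by apply: eq_bigr => k _; ring.
  rewrite e1 e2.
  have i1 : (pp * \sum_(j < p) W j <= pp * sigmak ^+ 2)%R.
    by rewrite ler_wpM2l // ltW.
  have i2 : ((1 - pp) * b%:R^-1 * \sum_(j < p) V j <= (1 - pp) * b%:R^-1 *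
      (8 * (L ^+ 2 * sqnorm (xk - xk1)) + 2 * (L ^+ 2 * sqnorm (xk1 - xk2))))%R.
    by rewrite ler_wpM2l // mulr_ge0 // invr_ge0 ler0n.
  set s1 := sqnorm (xk - xk1) in i2 *.
  set s2 := sqnorm (xk1 - xk2) in i2 *.
  set SWs := \sum_(j < p) W j in i1 *.
  set SVs := \sum_(j < p) V j in i2 *.
  set ib := b%:R^-1 in i2 *.
  apply: le_trans (lerD i1 (lerD (lexx _) i2)) _.
  by rewrite le_eqVlt; apply/orP; left; apply/eqP; ring.
Qed.
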